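(* Let $P$ be a purely atomic Borel probability measure on $\mathbb{R}$ with support on $n$ points. Then any mean-preserving contraction $Q$ of $P$ is a mixture of simple mean-preserving contractions of $P$ each having support on at most $n$ points.
   Context: Let $P$ have support $\{a_1<\dots<a_n\}$ with masses $\vec p=(p_1,\dots,p_n)$, all positive, and $\vec{pa}=(p_1a_1,\dots,p_na_n)$. A purely atomic probability measure $Q$ with support on distinct points $b_1,\dots,b_m$ and positive masses $\vec q=(q_1,\dots,q_m)$ is a simple mean-preserving contraction (smpc) of $P$ if there is a non-negative row-stochastic $n\times m$ matrix $F$ with $\vec pF=\vec q$ and $(\vec{pa})F=(q_1b_1,\dots,q_mb_m)$. A Borel probability measure $R$ on $\mathbb{R}$ is a mean-preserving contraction (mpc) of $P$ if there is a sequence of smpcs of $P$ converging weakly to $R$. Mixtures of smpcs are convex combinations of the associated measures (for non-purely-atomic mpcs, understood via weak limits). *)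

(* Defs.v *)
From HB Require Import structures.
From mathcomp Require Import all_boot all_order all_algebra.
From mathcomp Require Import all_classical all_reals all_analysis.
From Stdlib Require List.
Set Implicit Arguments. Unset Strict Implicit. Unset Printing Implicit Defensive.
Import Order.TTheory GRing.Theory Num.Theory.
Import numFieldNormedType.Exports.
Local Open Scope classical_set_scope.
Local Open Scope ring_scope.

(* A purely atomic finite measure, given by its (finitely many) support
   points and their masses. *)
Record atomic (R : realType) := Atomic {
  asz : nat;
  apt : 'I_asz -> R;
  ams : 'I_asz -> R }.
Arguments asz {R}.
Arguments apt {R}.
Arguments ams {R}.

Definition aint (R : realType) (S : atomic R) (f : R -> R) : R :=
  \sum_(j < asz S) ams S j * f (apt S j).

(* S is a simple mean-preserving contraction of P = sum_i p i delta_(a i) *)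
Definition is_smpc (R : realType) (n : nat) (a p : 'I_n -> R) (S : atomic R) : Prop :=
  injective (apt S) /\ (forall j, 0 < ams S j) /\
  exists F : 'M[R]_(n, asz S),
    (forall i j, 0 <= F i j) /\
    (forall i, \sum_(j < asz S) F i j = 1) /\
    (forall j, \sum_(i < n) p i * F i j = ams S j) /\
    (forall j, \sum_(i < n) (p i * a i) * F i j = ams S j * apt S j).

Definition bounded_continuous (R : realType) (f : R -> R) : Prop :=
  continuous f /\ exists M : R, forall x, `|f x| <= M.

Definition weak_cvg (R : realType) (I : nat -> (R -> R) -> R)
    (Q : probability R R) : Prop :=
  forall f : R -> R, bounded_continuous f ->
    (fun k => ((I k f)%:E)) @ \oo --> (\int[Q]_x (f x)%:E)%E.

Definition is_mpc (R : realType) (n : nat) (a p : 'I_n -> R)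
    (Q : probability R R) : Prop :=
  exists S : nat -> atomic R, (forall k, is_smpc a p (S k)) /\
    weak_cvg (fun k => aint (S k)) Q.

Definition mixture_int (R : realType) (s : seq (R * atomic R)) (f : R -> R) : R :=
  \sum_(x <- s) x.1 * aint x.2 f.

Definition is_mixture_of (R : realType) (C : atomic R -> Prop)
    (s : seq (R * atomic R)) : Prop :=
  (forall x, List.In x s -> 0 <= x.1 /\ C x.2) /\ \sum_(x <- s) x.1 = 1.

(* Q is a mixture of elements of C: a weak limit of finite convex
   combinations of elements of C (for purely atomic Q, an exact
   convex combination is such a limit). *)
Definition is_mixture (R : realType) (C : atomic R -> Prop)
    (Q : probability R R) : Prop :=
  exists s : nat -> seq (R * atomic R),
    (forall k, is_mixture_of C (s k)) /\ weak_cvg (fun k => mixture_int (s k)) Q.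

(* Main.v *)
Require Import Defs.
From HB Require Import structures.
From mathcomp Require Import all_boot all_order all_algebra.
From mathcomp Require Import all_classical all_reals all_analysis.
From mathcomp Require Import zify ring lra.
Set Implicit Arguments. Unset Strict Implicit. Unset Printing Implicit Defensive.
Import Order.TTheory GRing.Theory Num.Theory.
Local Open Scope ring_scope.
Definition valid (R : realType) n m (a p : 'I_n -> R) (b : 'I_m -> R)
  (F : 'I_n -> 'I_m -> R) : Prop :=
  (forall i j, 0 <= F i j) /\ (forall i, \sum_(j < m) F i j = 1) /\
  (forall j, \sum_(i < n) p i * a i * F i j = (\sum_(i < n) p i * F i j) * b j).

Definition muF (R : realType) n m (p : 'I_n -> R) (b : 'I_m -> R)
  (F : 'I_n -> 'I_m -> R) (f : R -> R) : R :=
  \sum_(j < m) (\sum_(i < n) p i * F i j) * f (b j).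

Definition supp (R : realType) n m (F : 'I_n -> 'I_m -> R) :=
  [set k : 'I_n * 'I_m | F k.1 k.2 != 0].

Lemma lin_step (R : realType) n m (a p : 'I_n -> R) (b : 'I_m -> R) (F D : 'I_n -> 'I_m -> R) (t : R) :
  valid a p b F -> (forall i, \sum_(j < m) D i j = 0) ->
  (forall j, \sum_(i < n) p i * (a i - b j) * D i j = 0) ->
  (forall i j, 0 <= F i j + t * D i j) ->
  valid a p b (fun i j => F i j + t * D i j).
Proof.
move=> [F0 [F1 F2]] D1 D2 G0; split; first exact: G0.
split.
  by move=> i; rewrite big_split /= -mulr_sumr D1 F1 mulr0 addr0.
move=> j.
have e1 : \sum_(i < n) p i * a i * (F i j + t * D i j) =
  \sum_(i < n) p i * a i * F i j + t * \sum_(i < n) p i * a i * D i j.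
  rewrite mulr_sumr -big_split; apply: eq_bigr => i _ /=; ring.
have e2 : \sum_(i < n) p i * (F i j + t * D i j) =
  \sum_(i < n) p i * F i j + t * \sum_(i < n) p i * D i j.
  rewrite mulr_sumr -big_split; apply: eq_bigr => i _ /=; ring.
have e3 : \sum_(i < n) p i * a i * D i j = (\sum_(i < n) p i * D i j) * b j.
  rewrite mulr_suml; apply/eqP; rewrite -subr_eq0 -sumrB; apply/eqP.
  rewrite -[RHS](D2 j); by apply: eq_bigr => i _; ring.
rewrite e1 e2 F2 e3; ring.
Qed.

Lemma mu_step (R : realType) n m (p : 'I_n -> R) (b : 'I_m -> R) (F D : 'I_n -> 'I_m -> R) (t : R) f :
  muF p b (fun i j => F i j + t * D i j) f = muF p b F f + t * muF p b D f.
Proof.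
rewrite /muF mulr_sumr -big_split; apply: eq_bigr => j _ /=.
have -> : \sum_(i < n) p i * (F i j + t * D i j) =
  \sum_(i < n) p i * F i j + t * \sum_(i < n) p i * D i j.
  rewrite mulr_sumr -big_split; apply: eq_bigr => i _ /=; ring.
ring.
Qed.

Lemma one_side (R : realType) n m (F D : 'I_n -> 'I_m -> R) :
  (forall i j, 0 <= F i j) -> (forall i j, F i j = 0 -> D i j = 0) ->
  (exists i j, D i j < 0) ->
  exists t : R, 0 < t /\ (forall i j, 0 <= F i j + t * D i j) /\
    (#|supp (fun i j => (F i j + t * D i j)%R)| < #|supp F|)%N.
Proof.
move=> F0 FD [i0 [j0 Hn]].
have Pk0 : (fun k : 'I_n * 'I_m => D k.1 k.2 < 0) (i0, j0) by [].
case: (@arg_minP _ _ _ (i0, j0) (fun k : 'I_n * 'I_m => D k.1 k.2 < 0)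
   (fun k => F k.1 k.2 / - D k.1 k.2) Pk0) => km /= Pkm Hmin.
have Fpos : forall k : 'I_n * 'I_m, D k.1 k.2 < 0 -> 0 < F k.1 k.2.
  move=> k hk; rewrite lt_def F0 andbT; apply/eqP => h.
  by move: hk; rewrite (FD _ _ h) ltxx.
set t := F km.1 km.2 / - D km.1 km.2.
have tpos : 0 < t by rewrite divr_gt0 // ?Fpos // oppr_gt0.
exists t; split => //; split.
  move=> i j; case: (ltP (D i j) 0) => hd.
    have := Hmin (i, j) hd; rewrite /= ler_pdivlMr ?oppr_gt0 // => h.
    rewrite -/t mulrN in h; lra.
  have := F0 i j; have : 0 <= t * D i j by rewrite mulr_ge0 // ltW.
  lra.
apply: proper_card; apply/properP; split.

  apply/fintype.subsetP => k; rewrite !inE; apply: contraNN => /eqP h.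
  by rewrite h (FD _ _ h) mulr0 addr0.
exists km; rewrite !inE.
  by rewrite gt_eqF // Fpos.
rewrite negbK /t; apply/eqP; field.
by rewrite lt_eqF.
Qed.

Lemma exists_sign (R : realType) n m (D : 'I_n -> 'I_m -> R) :
  (forall i, \sum_(j < m) D i j = 0) -> (exists i j, D i j != 0) ->
  (exists i j, D i j < 0) /\ (exists i j, 0 < D i j).
Proof.
move=> D1 [i0 [j0 hne]].
have key : forall (d : 'I_m -> R) j0, \sum_(j < m) d j = 0 -> 0 < d j0 ->
    exists j, d j < 0.
  move=> d k0 hs hp; apply/not_existsP => hc.
  have : 0 < \sum_(j < m) d j.
    rewrite (bigD1 k0) //=; apply: (lt_le_trans hp); rewrite lerDl.
    by apply: sumr_ge0 => j _; rewrite leNgt; apply/negP; exact: hc.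
  by rewrite hs ltxx.
case: (ltgtP (D i0 j0) 0) hne => // h _.
  split; first by exists i0, j0.
  have s0 : \sum_(j < m) - D i0 j = 0 by rewrite sumrN D1 oppr0.
  have s1 : 0 < - D i0 j0 by rewrite oppr_gt0.
  have [j hj] := key (fun j => - D i0 j) j0 s0 s1.
  by exists i0, j; rewrite -oppr_lt0.
split; last by exists i0, j0.
have [j hj] := key (fun j => D i0 j) j0 (D1 i0) h.
by exists i0, j.
Qed.

Definition col (R : realType) n m (F : 'I_n -> 'I_m -> R) (j : 'I_m) :=
  [set i : 'I_n | F i j != 0].
Definition Jnz (R : realType) n m (F : 'I_n -> 'I_m -> R) :=
  [set j : 'I_m | (0 < #|col F j|)%N].
Definition Jm (R : realType) n m (F : 'I_n -> 'I_m -> R) :=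
  [set j : 'I_m | (1 < #|col F j|)%N].

Lemma card_supp (R : realType) n m (F : 'I_n -> 'I_m -> R) :
  #|supp F| = (\sum_(j < m) #|col F j|)%N.
Proof.
rewrite -sum1_card big_mkcond /=.
have -> : (\sum_(k : 'I_n * 'I_m) (if k \in supp F then 1 else 0) =
   \sum_(i < n) \sum_(j < m) (if (i, j) \in supp F then 1 else 0))%N.
  rewrite pair_bigA /=; apply: congr_big => // -[i j] //.
rewrite exchange_big /=; apply: eq_bigr => j _.
rewrite -sum1_card [RHS]big_mkcond /=; apply: eq_bigr => i _.
by rewrite !inE.
Qed.

Lemma count_ge (R : realType) n m (F : 'I_n -> 'I_m -> R) :
  (n < #|Jnz F|)%N -> (n + #|Jm F| < #|supp F|)%N.
Proof.
move=> h.
have e1 : #|Jnz F| = (\sum_(j < m) (0 < #|col F j|))%N.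
  rewrite -sum1_card big_mkcond /=; apply: eq_bigr => j _; rewrite inE.
  by case: (0 < _)%N.
have e2 : #|Jm F| = (\sum_(j < m) (1 < #|col F j|))%N.
  rewrite -sum1_card big_mkcond /=; apply: eq_bigr => j _; rewrite inE.
  by case: (1 < _)%N.
have : (#|Jnz F| + #|Jm F| <= #|supp F|)%N.
  rewrite e1 e2 card_supp -big_split /=; apply: leq_sum => j _.
  case: #|col F j| => [|[|k]] //.
lia.
Qed.

Lemma single_col (R : realType) n m (a p : 'I_n -> R) (b : 'I_m -> R) F i j :
  (forall i, 0 < p i) -> valid a p b F -> (#|col F j| <= 1)%N -> F i j != 0 ->
  a i = b j.
Proof.
move=> Hp [F0 [F1 F2]] hc hne.
have oth : forall i', i' != i -> F i' j = 0.
  move=> i' hi; apply/eqP; apply/negP => hne'.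
  have : (#|[set i; i']| <= #|col F j|)%N.
    apply: subset_leq_card; apply/fintype.subsetP => x; rewrite !inE.
    by case/orP => /eqP -> //; apply/negP.
  by rewrite cards2 eq_sym hi; lia.
have := F2 j; rewrite (bigD1 i) //= [X in _ = X * _](bigD1 i) //=.
rewrite big1 ?addr0; last by move=> k hk; rewrite oth // mulr0.
rewrite big1 ?addr0; last by move=> k hk; rewrite oth // mulr0.
move=> h.
have : p i * F i j * (a i - b j) = 0.
  by rewrite mulrBr; apply/eqP; rewrite subr_eq0; apply/eqP; rewrite -h; ring.
move/eqP; rewrite !mulf_eq0 (negbTE hne) (gt_eqF (Hp i)) /= subr_eq0.
by move/eqP.
Qed.

Lemma ker_nz (R : fieldType) r c (A : 'M[R]_(r, c)) : (c < r)%N ->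
  exists u : 'rV[R]_r, u != 0 /\ u *m A = 0.
Proof.
move=> cr.
have hk : (0 < \rank (kermx A))%N.
  rewrite mxrank_ker; have := rank_leq_col A; lia.
have : kermx A != 0 by rewrite -mxrank_eq0 -lt0n.
move=> nz.
have [i hi] : exists i, row i (kermx A) != 0.
  apply/existsP; apply: contraR nz; rewrite negb_exists => /forallP H.
  apply/eqP/row_matrixP => i; rewrite row0; exact/eqP/negPn/H.
exists (row i (kermx A)); split => //.
by rewrite -row_mul mulmx_ker row0.
Qed.

Lemma sum_pair1 (R : realType) n m (x : 'I_n * 'I_m) i :
  \sum_(j < m) ((x == (i, j))%:R : R) = (x.1 == i)%:R.
Proof.
case: x => x1 x2 /=; rewrite (bigD1 x2) //= big1 ?addr0.
  by rewrite xpair_eqE eqxx andbT.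
by move=> j hj; rewrite xpair_eqE [x2 == j]eq_sym (negbTE hj) andbF.
Qed.

Lemma sum_pair2 (R : realType) n m (x : 'I_n * 'I_m) j (g : 'I_n -> R) :
  \sum_(i < n) g i * ((x == (i, j))%:R : R) = (x.2 == j)%:R * g x.1.
Proof.
case: x => x1 x2 /=; rewrite (bigD1 x1) //= big1 ?addr0.
  by rewrite xpair_eqE eqxx /= mulrC.
by move=> i hi; rewrite xpair_eqE [x1 == i]eq_sym (negbTE hi) /= mulr0.
Qed.

Lemma kernel_exists (R : realType) n m (a p : 'I_n -> R) (b : 'I_m -> R) F :
  (forall i, 0 < p i) -> valid a p b F -> (n < #|Jnz F|)%N ->
  exists D : 'I_n -> 'I_m -> R, (exists i j, D i j != 0) /\
    (forall i j, F i j = 0 -> D i j = 0) /\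
    (forall i, \sum_(j < m) D i j = 0) /\
    (forall j, \sum_(i < n) p i * (a i - b j) * D i j = 0).
Proof.
move=> Hp hv h.
pose A1 : 'M[R]_(#|supp F|, n) :=
  \matrix_(k, i) (((enum_val k).1 == i)%:R).
pose A2 : 'M[R]_(#|supp F|, #|Jm F|) :=
  \matrix_(k, l) (((enum_val k).2 == enum_val l)%:R *
     (p (enum_val k).1 * (a (enum_val k).1 - b (enum_val k).2))).
have [u [unz uA]] := ker_nz (row_mx A1 A2) (count_ge h).
move: uA; rewrite mul_mx_row -row_mx0 => /eq_row_mx [uA1 uA2].
pose D i j := \sum_(k < #|supp F|) u 0 k * ((enum_val k == (i, j))%:R).
exists D; split.
  have [k hk] : exists k, u 0 k != 0.
    apply/existsP; apply: contraR unz; rewrite negb_exists => /forallP H.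
    by apply/eqP/rowP => k; rewrite mxE; apply/eqP/negPn/H.
  exists (enum_val k).1, (enum_val k).2.
  rewrite /D (bigD1 k) //= -surjective_pairing eqxx mulr1 big1 ?addr0 //.
  move=> k' hk'; rewrite (inj_eq enum_val_inj) (negbTE hk').
  by rewrite mulr0.
split.
  move=> i j hF; rewrite /D big1 // => k _.
  case: (eqVneq (enum_val k) (i, j)) => [e|ne]; last by rewrite mulr0.
  by have := enum_valP k; rewrite e inE /= hF eqxx.
split.
  move=> i.
  have e : \sum_(j < m) D i j = (u *m A1) 0 i.
    rewrite mxE /D exchange_big /=; apply: eq_bigr => k _.
    by rewrite -mulr_sumr sum_pair1 mxE.
  by rewrite e uA1 mxE.
move=> j; case: (boolP (j \in Jm F)) => hj.
  have e : \sum_(i < n) p i * (a i - b j) * D i j =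
      (u *m A2) 0 (enum_rank_in hj j).
    rewrite mxE /D; under eq_bigr do rewrite mulr_sumr.
    rewrite exchange_big /=; apply: eq_bigr => k _.
    under eq_bigr do rewrite mulrCA.
    rewrite -mulr_sumr sum_pair2 mxE enum_rankK_in //.
    by case: eqP => [->|]; rewrite ?mul0r.
  by rewrite e uA2 mxE.
rewrite big1 // => i _.
case: (eqVneq (F i j) 0) => hF.
  have -> : D i j = 0.
    rewrite /D big1 // => k _; case: (eqVneq (enum_val k) (i, j)) => [e|ne].
      by have := enum_valP k; rewrite e inE /= hF eqxx.
    by rewrite mulr0.
  by rewrite mulr0.
have hc : (#|col F j| <= 1)%N by rewrite leqNgt; move: hj; rewrite inE.
by rewrite (single_col Hp hv hc hF) subrr mulr0 mul0r.
Qed.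

Lemma outJ (R : realType) n m (F : 'I_n -> 'I_m -> R) j :
  j \notin Jnz F -> forall i, F i j = 0.
Proof.
rewrite inE -leqNgt leqn0 cards_eq0 => /eqP h0 i.
apply/eqP; apply: contraT => hne.
have : i \in col F j by rewrite inE.
by rewrite h0 inE.
Qed.

Lemma base (R : realType) n m (a p : 'I_n -> R) (b : 'I_m -> R) F :
  (forall i, 0 < p i) -> injective b -> valid a p b F -> (#|Jnz F| <= n)%N ->
  exists S : atomic R, (is_smpc a p S /\ (asz S <= n)%N) /\
    forall f, aint S f = muF p b F f.
Proof.
move=> Hp binj [F0 [F1 F2]] hJ.
pose q j := \sum_(i < n) p i * F i j.
exists (@Atomic R #|Jnz F| (fun k => b (enum_val k)) (fun k => q (enum_val k))).
split; [split => //= |].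
  split; first by move=> x y /binj /enum_val_inj.
  split.
    move=> k; have := enum_valP k; rewrite inE card_gt0 => /set0Pn [i].
    rewrite inE => hne; rewrite /= /q (bigD1 i) //=.
    have h1 : 0 < p i * F i (enum_val k).
      by rewrite mulr_gt0 // lt_def hne F0.
    have h2 : 0 <= \sum_(i0 < n | i0 != i) p i0 * F i0 (enum_val k).
      by apply: sumr_ge0 => i0 _; rewrite mulr_ge0 // ltW.
    lra.
  exists (\matrix_(i, k) F i (enum_val k)).
  split; first by move=> i k; rewrite mxE.
  split.
    move=> i; under eq_bigr do rewrite mxE.
    rewrite -(big_enum_val (A := mem (Jnz F)) (fun j => F i j)) big_mkcond /=.
    rewrite -(F1 i); apply: eq_bigr => j _.
    by case: ifP => // /negbT /outJ ->.
  split.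
    by move=> k; under eq_bigr do rewrite mxE.
  by move=> k; under eq_bigr do rewrite mxE; rewrite F2.
move=> f; rewrite /aint /=.
rewrite -(big_enum_val (A := mem (Jnz F)) (fun j => q j * f (b j))) big_mkcond /=.
rewrite /muF; apply: eq_bigr => j _.
case: ifP => // /negbT hj; rewrite /q big1 ?mul0r // => i _.
by rewrite (outJ hj) mulr0.
Qed.

Lemma mix2 (R : realType) (C : atomic R -> Prop) s1 s2 (l : R) :
  0 <= l -> l <= 1 -> is_mixture_of C s1 -> is_mixture_of C s2 ->
  is_mixture_of C ([seq (l * x.1, x.2) | x <- s1] ++ [seq ((1 - l) * x.1, x.2) | x <- s2]) /\
  forall f, mixture_int ([seq (l * x.1, x.2) | x <- s1] ++
                         [seq ((1 - l) * x.1, x.2) | x <- s2]) f =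
            l * mixture_int s1 f + (1 - l) * mixture_int s2 f.
Proof.
move=> l0 l1 [h1 e1] [h2 e2]; split; first split.
- move=> x /List.in_app_iff [] /List.in_map_iff [y [<- hy]] /=.
    by have [y0 cy] := h1 y hy; split => //; rewrite mulr_ge0.
  have [y0 cy] := h2 y hy; split => //; rewrite mulr_ge0 //; lra.
- by rewrite big_cat !big_map /= -!mulr_sumr e1 e2; ring.
move=> f; rewrite /mixture_int big_cat !big_map /= !mulr_sumr.
by congr (_ + _); apply: eq_bigr => x _; rewrite mulrA.
Qed.

Lemma muN (R : realType) n m (p : 'I_n -> R) (b : 'I_m -> R) D f :
  muF p b (fun i j => - D i j) f = - muF p b D f.
Proof.
rewrite /muF -sumrN; apply: eq_bigr => j _; rewrite -mulNr -sumrN.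
by congr (_ * _); apply: eq_bigr => i _; rewrite mulrN.
Qed.

Lemma decomp (R : realType) n m (a p : 'I_n -> R) (b : 'I_m -> R) :
  (forall i, 0 < p i) -> injective b -> forall F, valid a p b F ->
  exists s, is_mixture_of (fun S => is_smpc a p S /\ (asz S <= n)%N) s /\
    forall f, mixture_int s f = muF p b F f.
Proof.
move=> Hp binj.
suff H : forall N F, (#|supp F| < N)%N -> valid a p b F ->
  exists s, is_mixture_of (fun S => is_smpc a p S /\ (asz S <= n)%N) s /\
    forall f, mixture_int s f = muF p b F f.
  by move=> F; apply: (H #|supp F|.+1).
elim=> [|N IH] F hN hv; first by [].
case: (leqP #|Jnz F| n) => hJ.
  have [S [hS he]] := base Hp binj hv hJ.
  exists [:: (1, S)]; split; first split.
  - by move=> x [<-|[]] /=; split => //; apply: ler01.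
  - by rewrite big_cons big_nil addr0.
  by move=> f; rewrite /mixture_int big_cons big_nil /= mul1r addr0 he.
have [D [Dnz [Dsup [D1 D2]]]] := kernel_exists Hp hv hJ.
have [hneg hpos] := exists_sign D1 Dnz.
have F0 := hv.1.
have [t1 [t1p [G1nn G1c]]] := one_side F0 Dsup hneg.
pose D' i j := - D i j.
have D'sup : forall i j, F i j = 0 -> D' i j = 0.
  by move=> i j h; rewrite /D' Dsup ?oppr0.
have D'neg : exists i j, D' i j < 0.
  by case: hpos => i [j h]; exists i, j; rewrite /D' oppr_lt0.
have [t2 [t2p [G2nn G2c]]] := one_side F0 D'sup D'neg.
have D'1 : forall i, \sum_(j < m) D' i j = 0.
  by move=> i; rewrite /D' sumrN D1 oppr0.
have D'2 : forall j, \sum_(i < n) p i * (a i - b j) * D' i j = 0.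
  by move=> j; rewrite /D'; under eq_bigr do rewrite mulrN; rewrite sumrN D2 oppr0.
have hv1 := lin_step hv D1 D2 G1nn.
have hv2 := lin_step hv D'1 D'2 G2nn.
have [s1 [hs1 he1]] := IH _ (leq_trans G1c hN) hv1.
have [s2 [hs2 he2]] := IH _ (leq_trans G2c hN) hv2.
pose l := t2 / (t1 + t2).
have l0 : 0 <= l by rewrite /l divr_ge0 // ltW // addr_gt0.
have l1 : l <= 1 by rewrite /l ler_pdivrMr ?addr_gt0 // mul1r lerDr ltW.
have [hm hme] := mix2 l0 l1 hs1 hs2.
eexists; split; first exact: hm.
move=> f; rewrite hme he1 he2 !mu_step muN /l.
field; rewrite gt_eqF // addr_gt0 //.
Qed.

Theorem corollary1 (R : realType) (n : nat) (a p : 'I_n -> R)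
  (Ha : forall i j : 'I_n, (i < j)%N -> a i < a j)
  (Hp : forall i, 0 < p i) (Hp1 : \sum_(i < n) p i = 1)
  (Q : probability R R) :
  is_mpc a p Q ->
  is_mixture (fun S => is_smpc a p S /\ (asz S <= n)%N) Q.
Proof.
move=> [S [HS Hw]].
have : forall k, exists s,
    is_mixture_of (fun S => is_smpc a p S /\ (asz S <= n)%N) s /\
    forall f, mixture_int s f = aint (S k) f.
  move=> k; have [binj [hpos [F [F0 [F1 [Fc Fm]]]]]] := HS k.
  have hv : valid a p (apt (S k)) (fun i j => F i j).
    split => //; split => // j; by rewrite Fm Fc.
  have [s [hs he]] := decomp Hp binj hv.
  exists s; split => // f; rewrite he /muF /aint; apply: eq_bigr => j _.
  by rewrite Fc.
case/choice => s hs.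
exists s; split; first by move=> k; case: (hs k).
move=> f hf.
have -> : (fun k => (mixture_int (s k) f)%:E) = (fun k => (aint (S k) f)%:E).
  by apply/funext => k; case: (hs k) => _ ->.
exact: Hw.
Qed.
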